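(* Let $p\ge 5$ be a prime and $n,k\in\mathbb{N}$ with $n>k$. Then for $1\le j\le \frac{p-1}{2}$, \[ \binom{2kp+2j}{kp+j}\binom{2np-2kp-2j}{np-kp-j}\equiv \frac{2p}{j}\binom{2k}{k}\binom{2n-2k-2}{n-k-1}(2k+1-2n)\pmod{p^2}, \] and for $\frac{p+1}{2}\le j\le p-1$, \[ \binom{2kp+2j}{kp+j}\binom{2np-2kp-2j}{np-kp-j}\equiv \frac{2p}{j}\binom{2k}{k}\binom{2n-2k-2}{n-k-1}(2k+1)\pmod{p^2}. \]
   Context: For rationals $a,b$, $a\equiv b\pmod{p^m}$ means $(a-b)/p^m$ is a rational number whose denominator is not divisible by $p$. *)

(* Defs.v *)
From HB Require Import structures.
From mathcomp Require Import all_boot all_order all_algebra.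
Set Implicit Arguments. Unset Strict Implicit. Unset Printing Implicit Defensive.
Import Order.TTheory GRing.Theory Num.Theory.
Local Open Scope ring_scope.

(* For rationals a, b: a = b (mod p^m) iff (a - b)/p^m is a rational whose
   (reduced) denominator is not divisible by p. *)
Definition rat_congr (a b : rat) (p m : nat) : Prop :=
  ~~ (p %| `|denq ((a - b) / (p ^ m)%:R)|)%N.

(* Main.v *)
Require Import Defs.
From HB Require Import structures.
From mathcomp Require Import all_boot all_order all_algebra.
From mathcomp Require Import zify ring.
Import Order.TTheory GRing.Theory Num.Theory.
Local Open Scope ring_scope.

Lemma denq_dvd_mul (x : rat) (d : nat) (c : int) :
  x * d%:R = c%:~R -> (`|denq x| %| d)%N.
Proof.
move=> h.
have e : numq x * d%:Z = c * denq x.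
  apply: (@intr_inj rat).
  rewrite !rmorphM /= numqE -h.
  by rewrite -mulrA [_ * d%:~R]mulrC mulrA.
have : (`|denq x| %| `|numq x| * d)%N.
  apply/dvdnP; exists `|c|%N.
  by rewrite -[d]/(`|d%:Z|%N) -abszM e abszM.
by rewrite Gauss_dvdr // coprime_sym coprime_num_den.
Qed.

Lemma helper (p j : nat) (a b : rat) (Z : int) : prime p -> ~~ (p %| j)%N ->
  (a - b) * j%:R = Z%:~R -> ((p ^ 2)%:Z %| Z)%Z -> rat_congr a b p 2.
Proof.
move=> pp pj h /dvdzP [c hc].
rewrite /rat_congr; apply: contra pj => pd.
apply: dvdn_trans pd _.
apply: (@denq_dvd_mul _ _ c).
rewrite mulrAC h hc rmorphM /=.
have nz : (p ^ 2)%:R != 0 :> rat.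
  by rewrite pnatr_eq0 expn_eq0; apply/nandP; left; rewrite -lt0n prime_gt0.
exact: mulfK.
Qed.

Fixpoint G (p x : nat) : nat :=
  if x is y.+1 then ((if (p %| y.+1)%N then 1 else y.+1) * G p y)%N else 1%N.

Lemma fact_decomp p x : (0 < p)%N -> x`! = (p ^ (x %/ p) * (x %/ p)`! * G p x)%N.
Proof.
move=> p0; elim: x => [|x IH]; first by rewrite div0n.
rewrite factS /= divnS //; case: ifP => hd /=.
  rewrite add1n factS expnS IH.
  have e : x.+1 = (p * (x %/ p).+1)%N.
    by rewrite -(divnK hd) divnS // hd add1n mulnC.
  rewrite {1}e; ring.
by rewrite add0n IH; ring.
Qed.

Lemma bin_decomp p x : (0 < p)%N ->
  ('C(2 * x, x) * (G p x ^ 2 * (p ^ (x %/ p) * (x %/ p)`!) ^ 2))%N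
  = (p ^ ((2 * x) %/ p) * ((2 * x) %/ p)`! * G p (2 * x))%N.
Proof.
move=> p0; rewrite -fact_decomp //.
have -> : ((G p x ^ 2 * (p ^ (x %/ p) * (x %/ p)`!) ^ 2) = x`! * (2 * x - x)`!)%N.
  rewrite (fact_decomp p x p0) (_ : (2 * x - x = x)%N); last by lia.
  rewrite (fact_decomp p x p0); ring.
by rewrite bin_fact //; lia.
Qed.

Lemma fact_Fp_neq0 p r : prime p -> (r < p)%N -> (r`!)%:R != 0 :> 'F_p.
Proof.
move=> pp; rewrite -(dvdn_pcharf (pchar_Fp pp)).
elim: r => [|r IH] hr; first by rewrite fact0 dvdn1; case: (p) pp => [|[]].
rewrite factS Euclid_dvdM // negb_or IH ?andbT; last by lia.
by apply/negP => /dvdn_leq; lia.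
Qed.

Lemma G_Fp p x : prime p -> (G p x)%:R = (-1) ^+ (x %/ p) * (x %% p)`!%:R :> 'F_p.
Proof.
move=> pp; have p0 := prime_gt0 pp.
elim: x => [|x IH]; first by rewrite div0n mod0n expr0 mul1r.
rewrite /= natrM IH divnS // modnS; case: ifP => hd.
  rewrite mul1r add1n exprS fact0 mulr1.
  have em : (x %% p = p.-1)%N.
    have h1 : (p %| (x %% p).+1)%N.
      have : (p %| x %/ p * p + (x %% p).+1)%N by rewrite addnS -divn_eq hd.
      by rewrite dvdn_addr // dvdn_mull.
    have h2 : ((x %% p).+1 <= p)%N by rewrite ltn_pmod.
    have := dvdn_leq (ltn0Sn _) h1; lia.
  rewrite em.
  have w : ((p.-1)`!.+1)%:R == 0 :> 'F_p.
    by rewrite -(dvdn_pcharf (pchar_Fp pp)) -Wilson // prime_gt1.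
  have w' : (p.-1)`!%:R = -1 :> 'F_p.
    by move: w; rewrite mulrSr addr_eq0 => /eqP.
  rewrite w'; ring.
rewrite add0n factS natrM.
have -> : (x.+1)%:R = ((x %% p).+1)%:R :> 'F_p.
  by rewrite -(Fp_nat_mod pp) modnS hd.
ring.
Qed.

Lemma binfact2 q : ((2 * q)`! = 'C(2 * q, q) * (q`! * q`!))%N.
Proof.
rewrite -{1}(bin_fact (_ : q <= 2 * q)%N); last by lia.
by rewrite (_ : (2 * q - q = q)%N) //; lia.
Qed.

Lemma LemA p q r : prime p -> (2 * r < p)%N ->
  ('C(2 * (q * p + r), q * p + r)%N)%:R
   = ('C(2 * q, q)%N)%:R * ('C(2 * r, r)%N)%:R :> 'F_p.
Proof.
move=> pp hr; have p0 := prime_gt0 pp.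
set x := (q * p + r)%N.
have hq : (x %/ p = q)%N by rewrite /x divnMDl // divn_small ?addn0 //; lia.
have hr' : (x %% p = r)%N by rewrite /x modnMDl modn_small //; lia.
have e2 : (2 * x = (2 * q) * p + 2 * r)%N by rewrite /x; ring.
have hQ : ((2 * x) %/ p = 2 * q)%N by rewrite e2 divnMDl // divn_small ?addn0.
have hR : ((2 * x) %% p = 2 * r)%N by rewrite e2 modnMDl modn_small.
have := bin_decomp p x p0; rewrite hq hQ binfact2.
have -> : (p ^ (2 * q) * ('C(2 * q, q) * (q`! * q`!)) * G p (2 * x) =
   ('C(2 * q, q) * G p (2 * x)) * (p ^ q * q`!) ^ 2)%N.
  by rewrite (mulnC 2 q) expnM; ring.
rewrite mulnA => /eqP; rewrite eqn_pmul2r; last first.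
  by rewrite expn_gt0 muln_gt0 expn_gt0 p0 fact_gt0.
move=> /eqP /(congr1 (fun n => n%:R : 'F_p)).
rewrite !natrM ?natrX !G_Fp // hq hQ hr' hR binfact2 !natrM.
have nz := fact_Fp_neq0 p r pp (leq_ltn_trans (leq_pmull _ (ltn0Sn 1)) hr).
move=> h; apply: (mulIf (mulf_neq0 nz nz)).
have s2 : ((-1) ^+ q) ^+ 2 = 1 :> 'F_p by rewrite -exprM mulnC exprM sqrrN expr1n expr1n.
have s2' : (-1) ^+ (2 * q)%N = 1 :> 'F_p by rewrite exprM sqrrN !expr1n.
rewrite s2' in h.
set R := (r`!)%:R in h *; set s := (-1) ^+ q in h s2 *.
have e1 : s * R * (s * R) = R * R by rewrite mulrACA -expr2 s2 mul1r.
by rewrite e1 in h; rewrite h mul1r !mulrA.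
Qed.

Lemma LemB p q r : prime p -> (r < p)%N -> (p <= 2 * r)%N ->
  exists U : nat, 'C(2 * (q * p + r), q * p + r)%N = (p * U)%N /\
   U%:R * (r`!)%:R * (r`!)%:R
     = - ((2 * q + 1)%N%:R * ('C(2 * q, q)%N)%:R * ((2 * r - p)`!)%:R) :> 'F_p.
Proof.
move=> pp hr hr2; have p0 := prime_gt0 pp.
set x := (q * p + r)%N.
have hq : (x %/ p = q)%N by rewrite /x divnMDl // divn_small ?addn0 //; lia.
have hr' : (x %% p = r)%N by rewrite /x modnMDl modn_small //; lia.
have e2 : (2 * x = (2 * q + 1) * p + (2 * r - p))%N by rewrite /x; lia.
have hQ : ((2 * x) %/ p = 2 * q + 1)%N.
  by rewrite e2 divnMDl // divn_small ?addn0 //; lia.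
have hR : ((2 * x) %% p = 2 * r - p)%N.
  by rewrite e2 modnMDl modn_small //; lia.
have := bin_decomp p x p0; rewrite hq hQ addn1 factS binfact2.
have -> : (p ^ (2 * q).+1 * ((2 * q).+1 * ('C(2 * q, q) * (q`! * q`!))) * G p (2 * x) =
   (p * (2 * q).+1 * 'C(2 * q, q) * G p (2 * x)) * (p ^ q * q`!) ^ 2)%N.
  by rewrite expnS (mulnC 2%N q) expnM; ring.
rewrite mulnA => /eqP; rewrite eqn_pmul2r; last first.
  by rewrite expn_gt0 muln_gt0 expn_gt0 p0 fact_gt0.
move=> /eqP E.
have nz := fact_Fp_neq0 p r pp hr.
have hG : (G p x)%:R = (-1) ^+ q * (r`!)%:R :> 'F_p by rewrite G_Fp // hq hr'.
have nG : ~~ (p %| G p x)%N.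
  rewrite (dvdn_pcharf (pchar_Fp pp)) hG mulf_eq0 negb_or nz andbT.
  by rewrite expf_eq0 oppr_eq0 oner_eq0 andbF.
have dC : (p %| 'C(2 * x, x))%N.
  have : (p %| 'C(2 * x, x) * G p x ^ 2)%N by rewrite E -!mulnA dvdn_mulr.
  by rewrite Gauss_dvdl // coprimeXr // prime_coprime.
exists ('C(2 * x, x) %/ p)%N; split; first by rewrite [RHS]mulnC divnK.
have E' : (('C(2 * x, x) %/ p * G p x ^ 2) * p =
    ((2 * q).+1 * 'C(2 * q, q) * G p (2 * x)) * p)%N.
  by rewrite mulnAC divnK // E; ring.
move/eqP: E'; rewrite eqn_pmul2r // => /eqP /(congr1 (fun n => n%:R : 'F_p)).
rewrite !natrM ?natrX hG G_Fp // hQ hR.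
set R := (r`!)%:R; set s := (-1) ^+ q.
have s2 : s ^+ 2 = 1 :> 'F_p by rewrite -exprM mulnC exprM sqrrN !expr1n.
have s3 : (-1) ^+ (2 * q + 1)%N = -1 :> 'F_p.
  by rewrite exprD exprM sqrrN !expr1n mul1r expr1.
rewrite s3 => h.
have e1 : s * R * (s * R) = R * R by rewrite mulrACA -expr2 s2 mul1r.
by rewrite e1 in h; rewrite -mulrA h mulN1r mulrN.
Qed.

Lemma wilsonF p : prime p -> ((p.-1)`!)%:R = -1 :> 'F_p.
Proof.
move=> pp.
have w : ((p.-1)`!.+1)%:R == 0 :> 'F_p.
  by rewrite -(dvdn_pcharf (pchar_Fp pp)) -Wilson // prime_gt1.
by move: w; rewrite mulrSr addr_eq0 => /eqP.
Qed.

Lemma reflW p t : prime p -> (t < p)%N ->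
  (t`!)%:R * ((p.-1 - t)`!)%:R = (-1) ^+ t.+1 :> 'F_p.
Proof.
move=> pp; elim: t => [|t IH] ht.
  by rewrite fact0 mul1r subn0 wilsonF // expr1.
have e : (p.-1 - t = (p.-1 - t.+1).+1)%N by lia.
have hn : ((p.-1 - t)%N%:R = - (t.+1)%:R :> 'F_p).
  apply/eqP; rewrite -addr_eq0 -natrD (_ : (p.-1 - t + t.+1 = p)%N); last by lia.
  by rewrite -(dvdn_pcharf (pchar_Fp pp)).
have := IH (ltnW ht); rewrite {1}e factS natrM -e hn factS natrM => h.
rewrite exprS -h; ring.
Qed.

Lemma keyId p j : prime p -> (1 <= j)%N -> (2 * j < p)%N ->
  j%:R * ('C(2 * j, j)%N)%:R * ((p - 2 * j)`!)%:R
    = 2 * ((p - j)`!)%:R ^+ 2 :> 'F_p.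
Proof.
move=> pp j1 hj.
have h1 : ((2 * j).-1 < p)%N by lia.
have h2 : (j.-1 < p)%N by lia.
have w1 := reflW p (2 * j).-1 pp h1.
have w2 := reflW p j.-1 pp h2.
rewrite (_ : (p.-1 - (2 * j).-1 = p - 2 * j)%N) in w1; last by lia.
rewrite (_ : (p.-1 - j.-1 = p - j)%N) in w2; last by lia.
rewrite (_ : (2 * j).-1.+1 = 2 * j)%N in w1; last by lia.
rewrite (_ : j.-1.+1 = j)%N in w2; last by lia.
have hC := binfact2 j.
rewrite (_ : (2 * j = ((2 * j).-1).+1)%N) in hC; last by lia.
rewrite factS (_ : (j`! = j * (j.-1)`!)%N) in hC; last by rewrite -{1}(prednK j1) factS prednK.
rewrite -(_ : (2 * j = ((2 * j).-1).+1)%N) in hC; last by lia.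
move/(congr1 (fun n => n%:R : 'F_p)): hC; rewrite !natrM.
set A := (((2 * j).-1)`!)%N%:R; set B := ((j.-1)`!)%N%:R; set X := ((p - 2 * j)`!)%N%:R.
set Y := ((p - j)`!)%N%:R; set C := ('C(2 * j, j))%N%:R; set J := j%:R => hC.
rewrite -/A -/X in w1; rewrite -/B -/Y in w2.
have s2 : ((-1) ^+ j) ^+ 2 = 1 :> 'F_p by rewrite -exprM mulnC exprM sqrrN !expr1n.
have s1 : (-1) ^+ (2 * j) = 1 :> 'F_p by rewrite exprM sqrrN !expr1n.
rewrite s1 in w1.
have nJ : J != 0.
  rewrite /J -(dvdn_pcharf (pchar_Fp pp)); apply/negP => /dvdn_leq; lia.
have nA : A != 0 by apply: fact_Fp_neq0 => //; lia.
have nB : B != 0 by apply: fact_Fp_neq0 => //; lia.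
apply: (mulIf (mulf_neq0 (mulf_neq0 (mulf_neq0 nJ nB) nB) nA)).
rewrite (_ : J * C * X * (J * B * B * A) = C * (J * B * (J * B)) * (A * X)); last by ring.
rewrite -hC w1 (_ : 2 * Y ^+ 2 * (J * B * B * A) = 2 * J * A * (B * Y) ^+ 2); last by ring.
rewrite w2 s2.
ring.
Qed.

Lemma helper2 (p j : nat) (a b : rat) (w : int) : prime p -> ~~ (p %| j)%N ->
  (a - b) * j%:R = (p%:Z * w)%:~R -> (p%:Z %| w)%Z -> rat_congr a b p 2.
Proof.
move=> pp pj h hw; apply: (helper _ _ _ _ _ pp pj h).
rewrite (_ : (p ^ 2)%:Z = p%:Z * p%:Z); last by rewrite -PoszM expnS expn1.
by apply: dvdz_mul => //; apply: dvdzz.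
Qed.

Lemma case1 (p n k j : nat) : prime p -> (k < n)%N -> (1 <= j)%N -> (2 * j < p)%N ->
     rat_congr
       (('C(2 * k * p + 2 * j, k * p + j) * 'C(2 * n * p - 2 * k * p - 2 * j, n * p - k * p - j))%:R : rat)
       ((2 * p)%:R / j%:R * ('C(2 * k, k))%:R * ('C(2 * n - 2 * k - 2, n - k - 1))%:R
          * ((2 * k + 1)%:R - (2 * n)%:R))
       p 2.
Proof.
move=> pp kn j1 hj.
have [N eN] : exists N, n = (k + N.+1)%N by exists (n - k).-1; lia.
subst n.
have e1 : (2 * k * p + 2 * j = 2 * (k * p + j))%N by ring.
have e2 : (2 * (k + N.+1) * p - 2 * k * p - 2 * j = 2 * (N * p + (p - j)))%N by lia.
have e3 : ((k + N.+1) * p - k * p - j = N * p + (p - j))%N by lia.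
have e4 : (2 * (k + N.+1) - 2 * k - 2 = 2 * N)%N by lia.
have e5 : (k + N.+1 - k - 1 = N)%N by lia.
rewrite e1 e2 e3 e4 e5.
have h1 : (p - j < p)%N by lia.
have h2 : (p <= 2 * (p - j))%N by lia.
have [U [hU hUF]] := LemB p N (p - j) pp h1 h2.
have hA := LemA p k j pp hj.
have hK := keyId p j pp j1 hj.
rewrite hU.
have pj : ~~ (p %| j)%N by apply/negP => /dvdn_leq; lia.
apply: (helper2 _ _ _ _ (((j * ('C(2 * (k * p + j), k * p + j) * U)
     + 2 * 'C(2 * k, k) * 'C(2 * N, N) * (2 * N + 1))%N)%:Z) pp pj).
  have jn : j%:R != 0 :> rat by rewrite pnatr_eq0; lia.
  have es : ((2*k+1)%:R - (2*(k+N.+1))%:R : rat) = - (2*N+1)%:R.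
    by rewrite (_ : (2*(k+N.+1) = (2*N+1)+(2*k+1))%N) ?natrD; [ring | lia].
  rewrite es -PoszM -pmulrn.
  rewrite !natrM !natrD !natrM; field; by rewrite pnatr_eq0 -lt0n.
rewrite (dvdz_pcharf (pchar_Fp pp)) -pmulrn natrD !natrM hA.
rewrite (_ : (2 * (p - j) - p = p - 2 * j)%N) in hUF; last by lia.
have nY := fact_Fp_neq0 p (p - j) pp h1.
move: hUF hK nY.
set J := (j%:R : 'F_p); set A := (('C(2 * k, k)%N)%:R : 'F_p); set C2 := (('C(2 * j, j)%N)%:R : 'F_p).
set B := (('C(2 * N, N)%N)%:R : 'F_p); set X := (((p - 2 * j)`!%N)%:R : 'F_p); set Y := (((p - j)`!%N)%:R : 'F_p).
set Uf := (U%:R : 'F_p); set M := ((2 * N + 1)%N%:R : 'F_p) => hUF hK nY.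
apply/eqP; apply: (mulIf (mulf_neq0 nY nY)); rewrite mul0r.
rewrite (_ : (J * (A * C2 * Uf) + 2 * A * B * M) * (Y * Y) = A * C2 * J * (Uf * Y * Y) + 2 * A * B * M * (Y * Y)); last by ring.
rewrite hUF (_ : A * C2 * J * (-(M * B * X)) = -(A * B * M) * (J * C2 * X)); last by ring.
rewrite hK; ring.
Qed.

Lemma case2 (p n k j : nat) : prime p -> (k < n)%N -> (p < 2 * j)%N -> (j < p)%N ->
     rat_congr
       (('C(2 * k * p + 2 * j, k * p + j) * 'C(2 * n * p - 2 * k * p - 2 * j, n * p - k * p - j))%:R : rat)
       ((2 * p)%:R / j%:R * ('C(2 * k, k))%:R * ('C(2 * n - 2 * k - 2, n - k - 1))%:R
          * (2 * k + 1)%:R)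
       p 2.
Proof.
move=> pp kn hj1 hj2.
have [N eN] : exists N, n = (k + N.+1)%N by exists (n - k).-1; lia.
subst n.
have e1 : (2 * k * p + 2 * j = 2 * (k * p + j))%N by ring.
have e2 : (2 * (k + N.+1) * p - 2 * k * p - 2 * j = 2 * (N * p + (p - j)))%N by lia.
have e3 : ((k + N.+1) * p - k * p - j = N * p + (p - j))%N by lia.
have e4 : (2 * (k + N.+1) - 2 * k - 2 = 2 * N)%N by lia.
have e5 : (k + N.+1 - k - 1 = N)%N by lia.
rewrite e1 e2 e3 e4 e5.
have h2 : (p <= 2 * j)%N by lia.
have [U [hU hUF]] := LemB p k j pp hj2 h2.
have hi : (2 * (p - j) < p)%N by lia.
have hA := LemA p N (p - j) pp hi.
have i1 : (1 <= p - j)%N by lia.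
have hK := keyId p (p - j) pp i1 hi.
rewrite (_ : (p - 2 * (p - j) = 2 * j - p)%N) in hK; last by lia.
rewrite (_ : (p - (p - j) = j)%N) in hK; last by lia.
rewrite hU.
have pj : ~~ (p %| j)%N by apply/negP => /dvdn_leq; lia.
apply: (helper2 _ _ _ _ ((j * (U * 'C(2 * (N * p + (p - j)), N * p + (p - j))))%N%:Z
     - (2 * 'C(2 * k, k) * 'C(2 * N, N) * (2 * k + 1))%N%:Z) pp pj).
  rewrite !rmorphM !rmorphB /= -!pmulrn !natrM.
  field; by rewrite pnatr_eq0 -lt0n; lia.
rewrite (dvdz_pcharf (pchar_Fp pp)) rmorphB /= -!pmulrn subr_eq0 !natrM hA.
have nY := fact_Fp_neq0 p j pp hj2.
have hI : ((p - j)%N%:R = - (j%:R) :> 'F_p).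
  by rewrite natrB ?(ltnW hj2) // pchar_Fp_0 // sub0r.
rewrite hI in hK.
move: hUF hK nY.
set J := (j%:R : 'F_p); set A := (('C(2 * k, k)%N)%:R : 'F_p); set C2 := (('C(2 * (p - j), p - j)%N)%:R : 'F_p).
set B := (('C(2 * N, N)%N)%:R : 'F_p); set X := (((2 * j - p)`!%N)%:R : 'F_p); set Y := (((j)`!%N)%:R : 'F_p).
set Uf := (U%:R : 'F_p); set K := ((2 * k + 1)%N%:R : 'F_p) => hUF hK nY.
apply/eqP; apply: (mulIf (mulf_neq0 nY nY)).
rewrite (_ : J * (Uf * (B * C2)) * (Y * Y) = J * B * C2 * (Uf * Y * Y)); last by ring.
rewrite hUF (_ : J * B * C2 * (-(K * A * X)) = K * A * B * (- J * C2 * X)); last by ring.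
rewrite hK; ring.
Qed.

Theorem mainTheorem3 (p n k : nat) :
  prime p -> (5 <= p)%N -> (k < n)%N ->
  (forall j : nat, (1 <= j)%N -> (j <= (p - 1) %/ 2)%N ->
     rat_congr
       (('C(2 * k * p + 2 * j, k * p + j) * 'C(2 * n * p - 2 * k * p - 2 * j, n * p - k * p - j))%:R : rat)
       ((2 * p)%:R / j%:R * ('C(2 * k, k))%:R * ('C(2 * n - 2 * k - 2, n - k - 1))%:R
          * ((2 * k + 1)%:R - (2 * n)%:R))
       p 2)
  /\
  (forall j : nat, ((p + 1) %/ 2 <= j)%N -> (j <= p - 1)%N ->
     rat_congr
       (('C(2 * k * p + 2 * j, k * p + j) * 'C(2 * n * p - 2 * k * p - 2 * j, n * p - k * p - j))%:R : rat)
       ((2 * p)%:R / j%:R * ('C(2 * k, k))%:R * ('C(2 * n - 2 * k - 2, n - k - 1))%:R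
          * (2 * k + 1)%:R)
       p 2).
Proof.
move=> pp p5 kn.
have op : (p %% 2 = 1)%N.
  rewrite modn2; case: (even_prime pp) => [e|->] //; by rewrite e in p5.
split=> j h1 h2.
  by apply: case1 => //; lia.
by apply: case2 => //; lia.
Qed.
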